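(* Let $T\subset\mathbb{R}^3$ be a smooth (open) surface patch with smooth unit normal field $\mathring\nu$, and let $P=I-\mathring\nu\otimes\mathring\nu$. Let $u\in[C^2(\overline T)]^3$, $\phi=\mathrm{id}+u$, and $F:=\nabla_\tau\phi=P+\nabla_\tau u$, and assume $\operatorname{rank}F=2$ on $T$. Let $\nu:=\operatorname{cof}(F)\mathring\nu/\|\operatorname{cof}(F)\mathring\nu\|_2$ (the deformed normal pulled back to $T$, so that $F^T\nu=0$). Let $\sigma$ be a symmetric $3\times3$ matrix field on $T$ with $\sigma\mathring\nu=0$. Then pointwise on $T$ $$\sigma:\big(F^T\nabla_\tau\nu-\nabla_\tau\mathring\nu\big)=-\,\sigma:\Big(\mathcal H_\nu+\big(1-\mathring\nu\cdot\nu\big)\nabla_\tau\mathring\nu\Big),\qquad \mathcal H_\nu:=\sum_{i=1}^3\nu_i\,\nabla_\tau^2u_i .$$ In particular, for such $\sigma$, $\int_T\sigma:(F^T\nabla_\tau\nu-\nabla_\tau\mathring\nu)\,dx=-\int_T\sigma:(\mathcal H_\nu+(1-\mathring\nu\cdot\nu)\nabla_\tau\mathring\nu)\,dx$.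
   Context: For a scalar function $f$ on $T$, $\nabla_\tau f\in\mathbb{R}^3$ is the surface (tangential) gradient, e.g. $\nabla_\tau f=P\nabla\tilde f$ for any smooth extension $\tilde f$. For a vector field $w$, $\nabla_\tau w$ is the $3\times3$ matrix with $(\nabla_\tau w)_{ij}=(\nabla_\tau w_i)_j$ (so $(\nabla_\tau w)\mathring\nu=0$). The surface Hessian of a scalar $f$ is $\nabla_\tau^2f:=\nabla_\tau(\nabla_\tau f)$, i.e. $(\nabla^2_\tau f)_{jk}=(\nabla_\tau(\nabla_\tau f)_j)_k$. $A:B=\sum_{ij}A_{ij}B_{ij}$, $\operatorname{cof}$ denotes the cofactor matrix and $a\otimes b=ab^T$. *)

(* Defs.v *)
From Stdlib Require Import Reals Lra ClassicalEpsilon.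
Open Scope R_scope.

Record pt := mkpt { p0 : R; p1 : R; p2 : R }.

Definition coord (x : pt) (i : nat) : R :=
  match i with 0%nat => p0 x | 1%nat => p1 x | 2%nat => p2 x | _ => 0 end.

Definition shift (x : pt) (k : nat) (t : R) : pt :=
  match k with
  | 0%nat => mkpt (p0 x + t) (p1 x) (p2 x)
  | 1%nat => mkpt (p0 x) (p1 x + t) (p2 x)
  | _ => mkpt (p0 x) (p1 x) (p2 x + t)
  end.

Definition dist2 (x y : pt) : R :=
  (p0 x - p0 y)^2 + (p1 x - p1 y)^2 + (p2 x - p2 y)^2.

Definition ball (x : pt) (r : R) : pt -> Prop := fun y => dist2 x y < r^2.

Definition open3 (Om : pt -> Prop) : Prop :=
  forall x, Om x -> exists r, 0 < r /\ forall y, ball x r y -> Om y.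

Definition continuous_on (Om : pt -> Prop) (f : pt -> R) : Prop :=
  forall x, Om x -> forall eps, 0 < eps -> exists delta, 0 < delta /\
    forall y, Om y -> ball x delta y -> Rabs (f y - f x) < eps.

Definition has_partial (k : nat) (f : pt -> R) (x : pt) (l : R) : Prop :=
  derivable_pt_lim (fun t => f (shift x k t)) 0 l.

Definition partial (k : nat) (f : pt -> R) (x : pt) : R :=
  epsilon (inhabits 0) (fun l => has_partial k f x l).

Fixpoint Ck (k : nat) (Om : pt -> Prop) (f : pt -> R) : Prop :=
  match k with
  | 0%nat => continuous_on Om f
  | S k' => continuous_on Om f /\
      (forall i, (i < 3)%nat -> forall x, Om x -> exists l, has_partial i f x l) /\
      (forall i, (i < 3)%nat -> Ck k' Om (partial i f))
  end.

Definition smooth (Om : pt -> Prop) (f : pt -> R) : Prop := forall k, Ck k Om f.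

Definition vec := nat -> R.
Definition mat := nat -> nat -> R.

Definition sum3 (g : nat -> R) : R := g 0%nat + g 1%nat + g 2%nat.
Definition dot (a b : vec) : R := sum3 (fun i => a i * b i).
Definition vnorm (v : vec) : R := sqrt (sum3 (fun i => v i ^ 2)).
Definition frob (A B : mat) : R := sum3 (fun i => sum3 (fun j => A i j * B i j)).
Definition delta (i j : nat) : R := if Nat.eqb i j then 1 else 0.

(** cofactor matrix of a 3x3 matrix (cyclic-index formula) *)
Definition cof3 (A : mat) (i j : nat) : R :=
  A (S i mod 3)%nat (S j mod 3)%nat * A (S (S i) mod 3)%nat (S (S j) mod 3)%nat
  - A (S i mod 3)%nat (S (S j) mod 3)%nat * A (S (S i) mod 3)%nat (S j mod 3)%nat.

Definition det3 (A : mat) : R := sum3 (fun j => A 0%nat j * cof3 A 0%nat j).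

(** rank of a 3x3 matrix = largest order of a non-vanishing minor
    (the entries of cof3 A are, up to sign, the 2x2 minors) *)
Definition rank3 (A : mat) : nat :=
  if excluded_middle_informative (det3 A <> 0) then 3%nat
  else if excluded_middle_informative
            (exists i j, (i < 3)%nat /\ (j < 3)%nat /\ cof3 A i j <> 0) then 2%nat
  else if excluded_middle_informative
            (exists i j, (i < 3)%nat /\ (j < 3)%nat /\ A i j <> 0) then 1%nat
  else 0%nat.

Definition grad (f : pt -> R) (x : pt) : vec := fun k => partial k f x.

(** Smooth surface patch T (embedded, without boundary), described locally as a
    regular level set, with n0 normal to T at points of T. *)
Definition surface_patch_with_normal (T : pt -> Prop) (n0 : pt -> vec) : Prop :=
  forall x, T x -> exists r, 0 < r /\ exists g : pt -> R,
    smooth (ball x r) g /\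
    (forall y, ball x r y -> vnorm (grad g y) <> 0) /\
    (forall y, ball x r y -> (T y <-> g y = 0)) /\
    (forall y, ball x r y -> T y -> exists c, forall i, (i < 3)%nat -> n0 y i = c * partial i g y).

(** tangential calculus: P = I - n0 (x) n0, grad_tau f = P grad f~ *)
Definition projP (n0 : pt -> vec) (x : pt) : mat :=
  fun i j => delta i j - n0 x i * n0 x j.

Definition tgrad (n0 : pt -> vec) (f : pt -> R) (x : pt) : vec :=
  fun j => sum3 (fun k => projP n0 x j k * partial k f x).

Definition tgradv (n0 : pt -> vec) (w : pt -> vec) (x : pt) : mat :=
  fun i j => tgrad n0 (fun y => w y i) x j.

Definition thess (n0 : pt -> vec) (f : pt -> R) (x : pt) : mat :=
  fun j k => tgrad n0 (fun y => tgrad n0 f y j) x k.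

Definition defF (n0 u : pt -> vec) (x : pt) : mat :=
  fun i j => projP n0 x i j + tgradv n0 u x i j.

Definition cofn (n0 u : pt -> vec) (x : pt) : vec :=
  fun i => sum3 (fun j => cof3 (defF n0 u x) i j * n0 x j).

Definition defnu (n0 u : pt -> vec) (x : pt) : vec :=
  fun i => cofn n0 u x i / vnorm (cofn n0 u x).

Definition Hnu (n0 u : pt -> vec) (x : pt) : mat :=
  fun j k => sum3 (fun i => defnu n0 u x i * thess n0 (fun y => u y i) x j k).

Definition FTgradnu (n0 u : pt -> vec) (x : pt) : mat :=
  fun j k => sum3 (fun i => defF n0 u x i j * tgradv n0 (defnu n0 u) x i k).

(* Main.v *)
Require Import Defs.
From Stdlib Require Import Reals Lra Lia ClassicalEpsilon.
Open Scope R_scope.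
From Stdlib Require Import FunctionalExtensionality.

Definition mv (A : mat) (v : vec) : vec := fun m => sum3 (fun l => A m l * v l).
Definition crs (a b : vec) : vec := fun m =>
  a (S m mod 3)%nat * b (S (S m) mod 3)%nat - a (S (S m) mod 3)%nat * b (S m mod 3)%nat.
Definition ej (j : nat) : vec := fun l => delta j l.

Lemma cross_id (A : mat) (n : vec) i j : (i < 3)%nat -> (j < 3)%nat ->
  cof3 A i j * dot n n - n j * sum3 (fun l => cof3 A i l * n l)
  = crs (mv A n) (mv A (crs (ej j) n)) i.
Proof.
  intros Hi Hj.
  destruct i as [|[|[|i]]]; try lia; destruct j as [|[|[|j]]]; try lia;
  unfold crs, mv, ej, cof3, dot, sum3, delta; simpl; ring.
Qed.

Lemma sum3_mul0 (c X : nat -> R) : (forall i, (i < 3)%nat -> X i = 0) ->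
  sum3 (fun i => c i * X i) = 0.
Proof. intros H; unfold sum3; rewrite !H by lia; ring. Qed.

Lemma adj_alg (A : mat) (n : vec) :
  (forall i, (i < 3)%nat -> sum3 (fun j => A i j * n j) = 0) -> dot n n = 1 ->
  forall j, (j < 3)%nat -> sum3 (fun i => A i j * sum3 (fun l => cof3 A i l * n l)) = 0.
Proof.
  intros HA Hn j Hj.
  assert (D : forall m, (m < 3)%nat -> det3 A * n m = sum3 (fun i => cof3 A i m * sum3 (fun l => A i l * n l))).
  { intros m Hm; destruct m as [|[|[|m]]]; try lia; unfold det3, cof3, sum3; simpl; ring. }
  assert (D0 : forall m, (m < 3)%nat -> det3 A * n m = 0).
  { intros m Hm. rewrite D by exact Hm. apply (sum3_mul0 (fun i => cof3 A i m) (fun i => sum3 (fun l => A i l * n l))). exact HA. }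
  assert (Dz : det3 A = 0).
  { transitivity (n 0%nat * (det3 A * n 0%nat) + n 1%nat * (det3 A * n 1%nat) + n 2%nat * (det3 A * n 2%nat)).
    - transitivity (det3 A * dot n n). rewrite Hn; ring. unfold dot, sum3; ring.
    - rewrite !D0 by lia; ring. }
  transitivity (det3 A * n j).
  - destruct j as [|[|[|j]]]; try lia; unfold det3, cof3, sum3; simpl; ring.
  - rewrite Dz; ring.
Qed.

Lemma cof_rank1 (A : mat) (n : vec) :
  (forall i, (i < 3)%nat -> sum3 (fun j => A i j * n j) = 0) -> dot n n = 1 ->
  forall i j, (i < 3)%nat -> (j < 3)%nat -> cof3 A i j = n j * sum3 (fun l => cof3 A i l * n l).
Proof.
  intros HA Hn i j Hi Hj.
  pose proof (cross_id A n i j Hi Hj) as E. rewrite Hn in E.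
  unfold crs at 1 in E.
  assert (Z : forall m, (m < 3)%nat -> mv A n m = 0) by (intros m Hm; apply HA; exact Hm).
  rewrite (Z (S i mod 3)%nat), (Z (S (S i) mod 3)%nat) in E
    by (apply Nat.mod_upper_bound; lia).
  lra.
Qed.

Lemma Fn_alg (n : vec) (p : mat) i : (i < 3)%nat -> dot n n = 1 ->
  sum3 (fun j => ((delta i j - n i * n j) + sum3 (fun l => (delta j l - n j * n l) * p i l)) * n j) = 0.
Proof.
  intros Hi Hn.
  transitivity ((1 - dot n n) * (n i + sum3 (fun l => p i l * n l))).
  - destruct i as [|[|[|i]]]; try lia; unfold dot, sum3, delta; simpl; ring.
  - rewrite Hn; ring.
Qed.

Lemma frob_ext (s A B : mat) : (forall j k, (j < 3)%nat -> (k < 3)%nat -> A j k = B j k) ->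
  frob s A = frob s B.
Proof. intros H; unfold frob, sum3; rewrite !H by lia; reflexivity. Qed.

Lemma lin3 (P Y X : nat -> R) : (forall k, (k < 3)%nat -> Y k = X k) ->
  sum3 (fun k => P k * Y k) = sum3 (fun k => P k * X k).
Proof. intros H; unfold sum3; rewrite !H by lia; reflexivity. Qed.

Lemma final_alg (s P : mat) (n nu : vec) (c : nat -> nat -> R) (d : nat -> nat -> nat -> R) :
  (forall i j, s i j = s j i) -> (forall i, (i < 3)%nat -> sum3 (fun j => s i j * n j) = 0) ->
  frob s (fun j k' => (- sum3 (fun k => P k' k * sum3 (fun i => (-(c i k * n j + n i * c j k) + d i j k) * nu i)))
                      - sum3 (fun k => P k' k * c j k))
  = - frob s (fun j k' => sum3 (fun i => nu i * sum3 (fun k => P k' k * d i j k))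
                          + (1 - dot n nu) * sum3 (fun k => P k' k * c j k)).
Proof.
  intros Hs Hn.
  assert (R' : forall k', (k' < 3)%nat -> sum3 (fun j => s j k' * n j) = 0).
  { intros k' Hk. rewrite <- (Hn k' Hk). unfold sum3; rewrite !(Hs _ k'); reflexivity. }
  set (X := fun k' => sum3 (fun k => P k' k * sum3 (fun i => c i k * nu i))).
  apply Rminus_diag_uniq.
  transitivity (X 0%nat * sum3 (fun j => s j 0%nat * n j) + X 1%nat * sum3 (fun j => s j 1%nat * n j)
     + X 2%nat * sum3 (fun j => s j 2%nat * n j)).
  - unfold X, frob, dot, sum3; ring.
  - rewrite !R' by lia; ring.
Qed.

Lemma shift0 x k : shift x k 0 = x.
Proof. destruct x; destruct k as [|[|k]]; simpl; f_equal; ring. Qed.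

Definition exhp k f x := exists l, has_partial k f x l.

Lemma hp_spec k f x : exhp k f x -> has_partial k f x (partial k f x).
Proof. intros H. unfold partial. apply epsilon_spec. exact H. Qed.

Lemma hp_eq k f x l1 l2 : has_partial k f x l1 -> l1 = l2 -> has_partial k f x l2.
Proof. intros H ->; exact H. Qed.

Lemma hp_plus k f g x lf lg : has_partial k f x lf -> has_partial k g x lg ->
  has_partial k (fun y => f y + g y) x (lf + lg).
Proof. intros H1 H2. exact (derivable_pt_lim_plus _ _ _ _ _ H1 H2). Qed.

Lemma hp_minus k f g x lf lg : has_partial k f x lf -> has_partial k g x lg ->
  has_partial k (fun y => f y - g y) x (lf - lg).
Proof. intros H1 H2. exact (derivable_pt_lim_minus _ _ _ _ _ H1 H2). Qed.

Lemma hp_mult k f g x lf lg : has_partial k f x lf -> has_partial k g x lg ->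
  has_partial k (fun y => f y * g y) x (lf * g x + f x * lg).
Proof.
  intros H1 H2. pose proof (derivable_pt_lim_mult _ _ _ _ _ H1 H2) as K.
  cbv beta in K. rewrite shift0 in K. exact K.
Qed.

Lemma hp_const k (a : R) x : has_partial k (fun _ => a) x 0.
Proof. exact (derivable_pt_lim_const a 0). Qed.

Lemma ex_plus k f g x : exhp k f x -> exhp k g x -> exhp k (fun y => f y + g y) x.
Proof. intros [l1 H1] [l2 H2]; eexists; exact (hp_plus _ _ _ _ _ _ H1 H2). Qed.
Lemma ex_minus k f g x : exhp k f x -> exhp k g x -> exhp k (fun y => f y - g y) x.
Proof. intros [l1 H1] [l2 H2]; eexists; exact (hp_minus _ _ _ _ _ _ H1 H2). Qed.
Lemma ex_mult k f g x : exhp k f x -> exhp k g x -> exhp k (fun y => f y * g y) x.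
Proof. intros [l1 H1] [l2 H2]; eexists; exact (hp_mult _ _ _ _ _ _ H1 H2). Qed.
Lemma ex_const k (a : R) x : exhp k (fun _ => a) x.
Proof. eexists; exact (hp_const k a x). Qed.
Lemma ex_pow2 k f x : exhp k f x -> exhp k (fun y => f y ^ 2) x.
Proof. intros H. exact (ex_mult _ _ _ _ H (ex_mult _ _ (fun _ => 1) _ H (ex_const _ _ _))). Qed.

Lemma ex_div k f g x : exhp k f x -> exhp k g x -> g x <> 0 -> exhp k (fun y => f y / g y) x.
Proof.
  intros [l1 H1] [l2 H2] Hg. eexists.
  apply (derivable_pt_lim_div _ _ _ _ _ H1 H2). cbv beta. rewrite shift0. exact Hg.
Qed.

Lemma ex_sqrt k f x : exhp k f x -> 0 < f x -> exhp k (fun y => sqrt (f y)) x.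
Proof.
  intros [l1 H1] Hp. eexists.
  eapply (derivable_pt_lim_comp (fun t => f (shift x k t)) sqrt _ _ _ H1).
  apply derivable_pt_lim_sqrt. rewrite shift0. exact Hp.
Qed.

Lemma ball_shift x k r h : Rabs h < r -> ball x r (shift x k h).
Proof.
  intros H. assert (h ^ 2 < r ^ 2).
  { rewrite <- (pow2_abs h). pose proof (Rabs_pos h). nra. }
  unfold ball, dist2; destruct k as [|[|k]]; simpl; nra.
Qed.

Lemma hp_zero k f x l r : 0 < r -> (forall y, ball x r y -> f y = 0) ->
  has_partial k f x l -> l = 0.
Proof.
  intros Hr Hf H.
  apply (uniqueness_limite (fun t => f (shift x k t)) 0); [exact H|].
  intros eps Heps. exists (mkposreal r Hr). intros h Hh Hhr. simpl in Hhr.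
  rewrite Rplus_0_l, !Hf.
  - replace ((0 - 0) / h - 0) with 0 by (unfold Rdiv; ring). rewrite Rabs_R0; exact Heps.
  - apply ball_shift. rewrite Rabs_R0; exact Hr.
  - apply ball_shift. exact Hhr.
Qed.

Lemma cof_nz (A : mat) : rank3 A = 2%nat -> exists i j, (i < 3)%nat /\ (j < 3)%nat /\ cof3 A i j <> 0.
Proof.
  unfold rank3. destruct (excluded_middle_informative (det3 A <> 0)); [discriminate|].
  destruct (excluded_middle_informative _) as [H|]; [intros _; exact H|].
  destruct (excluded_middle_informative _); discriminate.
Qed.

Ltac solve_ex leaf :=
  repeat first [ leaf | apply ex_const | apply ex_minus | apply ex_plus | apply ex_mult ].

Theorem mainTheorem3 (Om T : pt -> Prop) (n0 u : pt -> vec) (sigma : pt -> mat) :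
  open3 Om ->
  (forall x, T x -> Om x) ->
  surface_patch_with_normal T n0 ->
  (forall i, (i < 3)%nat -> smooth Om (fun y => n0 y i)) ->
  (forall y, Om y -> dot (n0 y) (n0 y) = 1) ->
  (forall i, (i < 3)%nat -> Ck 2 Om (fun y => u y i)) ->
  (forall x, T x -> rank3 (defF n0 u x) = 2%nat) ->
  (forall x, T x -> forall i j, sigma x i j = sigma x j i) ->
  (forall x, T x -> forall i, (i < 3)%nat -> sum3 (fun j => sigma x i j * n0 x j) = 0) ->
  forall x, T x ->
    frob (sigma x) (fun j k => FTgradnu n0 u x j k - tgradv n0 n0 x j k)
    = - frob (sigma x)
        (fun j k => Hnu n0 u x j k + (1 - dot (n0 x) (defnu n0 u x)) * tgradv n0 n0 x j k).
Proof.
  intros HOm HTOm Hpatch Hn Hnn Hu Hrank Hsym Hsn x Tx.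
  pose proof (HTOm x Tx) as Omx.
  assert (HFn : forall y, Om y -> forall i, (i < 3)%nat -> sum3 (fun j => defF n0 u y i j * n0 y j) = 0).
  { intros y Hy i Hi. exact (Fn_alg (n0 y) (fun i l => partial l (fun z => u z i) y) i Hi (Hnn y Hy)). }
  assert (HG : forall y, Om y -> forall j, (j < 3)%nat ->
            sum3 (fun i => defF n0 u y i j * defnu n0 u y i) = 0).
  { intros y Hy j Hj. unfold defnu, Rdiv.
    transitivity (sum3 (fun i => defF n0 u y i j * cofn n0 u y i) * / vnorm (cofn n0 u y)).
    - unfold sum3; ring.
    - unfold cofn. rewrite (adj_alg _ _ (HFn y Hy) (Hnn y Hy) j Hj). ring. }
  assert (Hpos : 0 < sum3 (fun m => cofn n0 u x m ^ 2)).
  { destruct (cof_nz _ (Hrank x Tx)) as [i [j [Hi [Hj Hc]]]].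
    rewrite (cof_rank1 _ (n0 x) (HFn x Omx) (Hnn x Omx) i j Hi Hj) in Hc.
    assert (Hci : cofn n0 u x i <> 0).
    { intro E. apply Hc. unfold cofn in E. rewrite E. ring. }
    assert (0 < cofn n0 u x i ^ 2).
    { simpl. rewrite Rmult_1_r. apply Rsqr_pos_lt. exact Hci. }
    pose proof (pow2_ge_0 (cofn n0 u x 0%nat)).
    pose proof (pow2_ge_0 (cofn n0 u x 1%nat)).
    pose proof (pow2_ge_0 (cofn n0 u x 2%nat)).
    unfold sum3. destruct i as [|[|[|i]]]; try lia; lra. }
  assert (HA : forall j k, (j < 3)%nat -> (k < 3)%nat ->
    sum3 (fun i => (-(partial k (fun y => n0 y i) x * n0 x j + n0 x i * partial k (fun y => n0 y j) x)
                     + partial k (fun y => tgrad n0 (fun z => u z i) y j) x) * defnu n0 u x i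
                   + defF n0 u x i j * partial k (fun y => defnu n0 u y i) x) = 0).
  { intros j k Hj Hk.
    assert (En : forall i, (i < 3)%nat -> exhp k (fun y => n0 y i) x).
    { intros i Hi. destruct (Hn i Hi 1%nat) as [_ [He _]]. exact (He k Hk x Omx). }
    assert (Epu : forall i l, (i < 3)%nat -> (l < 3)%nat ->
              exhp k (fun y => partial l (fun z => u z i) y) x).
    { intros i l Hi Hl. destruct (Hu i Hi) as [_ [_ H2]]. destruct (H2 l Hl) as [_ [He _]].
      exact (He k Hk x Omx). }
    assert (Etg : forall i j, (i < 3)%nat -> (j < 3)%nat ->
              exhp k (fun y => tgrad n0 (fun z => u z i) y j) x).
    { intros i j' Hi Hj'. unfold tgrad, projP, sum3. solve_ex ltac:(first [ apply En; lia | apply Epu; lia ]). }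
    assert (EF : forall i j, (i < 3)%nat -> (j < 3)%nat -> exhp k (fun y => defF n0 u y i j) x).
    { intros i j' Hi Hj'. unfold defF, projP, tgradv. solve_ex ltac:(first [ apply En; lia | apply Etg; lia ]). }
    assert (Ecofn : forall i, (i < 3)%nat -> exhp k (fun y => cofn n0 u y i) x).
    { intros i Hi. unfold cofn, cof3, sum3. solve_ex ltac:(first [ apply En; lia | apply EF; apply Nat.mod_upper_bound; lia ]). }
    assert (Enu : forall i, (i < 3)%nat -> exhp k (fun y => defnu n0 u y i) x).
    { intros i Hi. unfold defnu. apply ex_div.
      - apply Ecofn; exact Hi.
      - unfold vnorm. apply ex_sqrt; [|exact Hpos]. unfold sum3. solve_ex ltac:(apply ex_pow2; apply Ecofn; lia).
      - unfold vnorm. apply Rgt_not_eq. apply sqrt_lt_R0. exact Hpos. }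
    assert (HFv : forall i, (i < 3)%nat -> has_partial k (fun y => defF n0 u y i j) x
       (-(partial k (fun y => n0 y i) x * n0 x j + n0 x i * partial k (fun y => n0 y j) x)
                     + partial k (fun y => tgrad n0 (fun z => u z i) y j) x)).
    { intros i Hi. eapply hp_eq.
      - unfold defF, projP, tgradv. apply hp_plus; [apply hp_minus|].
        + apply hp_const.
        + apply hp_mult; apply hp_spec; apply En; lia.
        + apply hp_spec, Etg; lia.
      - cbv beta. ring. }
    destruct (HOm x Omx) as [r [Hr Hball]].
    apply (hp_zero k (fun y => sum3 (fun i => defF n0 u y i j * defnu n0 u y i)) x _ r Hr).
    - intros y Hy. exact (HG y (Hball y Hy) j Hj).
    - eapply hp_eq.
      + unfold sum3. apply hp_plus; [apply hp_plus|]; apply hp_mult;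
        first [ apply HFv; lia | apply hp_spec, Enu; lia ].
      + unfold sum3; ring. }
  pose (C := fun i k => partial k (fun y => n0 y i) x).
  pose (D := fun i j k => partial k (fun y => tgrad n0 (fun z => u z i) y j) x).
  transitivity (frob (sigma x) (fun j k' =>
     (- sum3 (fun k => projP n0 x k' k * sum3 (fun i => (-(C i k * n0 x j + n0 x i * C j k) + D i j k) * defnu n0 u x i)))
     - sum3 (fun k => projP n0 x k' k * C j k))).
  - apply frob_ext. intros j k' Hj Hk'.
    assert (E1 : FTgradnu n0 u x j k' = sum3 (fun k => projP n0 x k' k *
              sum3 (fun i => defF n0 u x i j * partial k (fun y => defnu n0 u y i) x))).
    { unfold FTgradnu, tgradv, tgrad, sum3; ring. }
    assert (E2 : sum3 (fun k => projP n0 x k' k *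
              sum3 (fun i => defF n0 u x i j * partial k (fun y => defnu n0 u y i) x))
            = sum3 (fun k => projP n0 x k' k *
              - sum3 (fun i => (-(C i k * n0 x j + n0 x i * C j k) + D i j k) * defnu n0 u x i))).
    { apply lin3. intros k Hk. pose proof (HA j k Hj Hk) as H. unfold C, D. unfold sum3 in *. lra. }
    rewrite E1, E2. unfold C, D, tgradv, tgrad, sum3. ring.
  - rewrite (final_alg (sigma x) (projP n0 x) (n0 x) (defnu n0 u x) C D (Hsym x Tx) (Hsn x Tx)).
    f_equal.
Qed.
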